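(* For any $d\ge1$ and $j\in[d]$, the function $f:\mathbb R^d\to\mathbb R$, $f(\zeta)=\mathrm{smax}(\zeta)_j=e^{\zeta_j}/\sum_{i=1}^de^{\zeta_i}$, is real-analytic of $(1/(2e^2),1)$-type (constant functions).
   Context: Let $U\subseteq\mathbb R^d$ be open and $\tau_1,\tau_2:U\to\mathbb R_{>0}$. A real-analytic $f:U\to\mathbb R$ has $(\tau_1,\tau_2)$-type if for every $\zeta_0\in U$, writing the power series of $f$ at $\zeta_0$ as $\sum_\mu a_{\zeta_0,\mu}(\zeta-\zeta_0)^\mu$ (over multi-indices $\mu$), for every $\zeta$ with $\|\zeta-\zeta_0\|_\infty\le\tau_1(\zeta_0)$ the series converges absolutely and $\sum_{\mu:|\mu|\ge1}|a_{\zeta_0,\mu}|\,|\zeta-\zeta_0|^\mu\le\tau_2(\zeta_0)$, where $|\zeta-\zeta_0|^\mu=\prod_i|\zeta_i-\zeta_{0,i}|^{\mu_i}$. *)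

(* Defs.v *)
From mathcomp Require Import all_boot all_order all_algebra.
From mathcomp Require Import all_classical all_reals all_analysis.
Set Implicit Arguments. Unset Strict Implicit. Unset Printing Implicit Defensive.
Import Order.TTheory GRing.Theory Num.Theory.
Import numFieldNormedType.Exports.
Local Open Scope classical_set_scope.
Local Open Scope ring_scope.

Section Defs.
Variables (R : realType) (d : nat).

Definition pt := 'I_d -> R.
Definition midx := {ffun 'I_d -> nat}.

Definition mdeg (mu : midx) : nat := (\sum_i mu i)%N.

Definition mono (z0 z : pt) (mu : midx) : R :=
  \prod_i (z i - z0 i) ^+ (mu i).

Definition amono (z0 z : pt) (mu : midx) : R :=
  \prod_i `|z i - z0 i| ^+ (mu i).

Definition inf_dist_le (z0 z : pt) (r : R) : Prop :=
  forall i, `|z i - z0 i| <= r.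

Definition hom_part (a : midx -> R) (z0 z : pt) (n : nat) : R :=
  \sum_(m : {ffun 'I_d -> 'I_n.+1} | (\sum_i (m i : nat))%N == n)
     a [ffun i => (m i : nat)] * mono z0 z [ffun i => (m i : nat)].

Definition abs_sum (a : midx -> R) (z0 z : pt) (S : set midx) : \bar R :=
  \esum_(mu in S) (`|a mu| * amono z0 z mu)%:E.

Definition abs_conv (a : midx -> R) (z0 z : pt) : Prop :=
  (abs_sum a z0 z setT < +oo)%E.

Definition is_power_series_at (U : set pt) (f : pt -> R) (z0 : pt)
    (a : midx -> R) : Prop :=
  exists2 r : R, 0 < r &
    forall z, (forall i, `|z i - z0 i| < r) ->
      U z /\ abs_conv a z0 z /\
      (fun N : nat => \sum_(n < N) hom_part a z0 z n) @ \oo --> f z.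

Definition real_analytic_on (U : set pt) (f : pt -> R) : Prop :=
  forall z0, U z0 -> exists a, is_power_series_at U f z0 a.

Definition analytic_type (U : set pt) (tau1 tau2 : pt -> R) (f : pt -> R) : Prop :=
  real_analytic_on U f /\
  forall z0, U z0 -> forall a, is_power_series_at U f z0 a ->
    forall z, inf_dist_le z0 z (tau1 z0) ->
      abs_conv a z0 z /\
      (abs_sum a z0 z [set mu | (0 < mdeg mu)%N] <= (tau2 z0)%:E)%E.

End Defs.

Definition smax (R : realType) (d : nat) (j : 'I_d) (z : 'I_d -> R) : R :=
  expR (z j) / \sum_(i < d) expR (z i).

(* Main.v *)
Require Import Defs.
From mathcomp Require Import all_boot all_order all_algebra.
From mathcomp Require Import all_classical all_reals all_analysis.
From mathcomp Require Import ring lra.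
Set Implicit Arguments. Unset Strict Implicit. Unset Printing Implicit Defensive.
Import Order.TTheory GRing.Theory Num.Theory.
Import numFieldNormedType.Exports.
Local Open Scope classical_set_scope.
Local Open Scope ring_scope.


Section Comb.
Variables (R : realType) (d : nat).
Local Notation midx := (midx d).

Definition Dg n : set midx := [set mu | mdeg mu = n].
Definition mon (w : 'I_d -> R) (mu : midx) : R := \prod_i w i ^+ mu i.
Definition gs (x : midx -> R) (w : 'I_d -> R) n : R :=
  \sum_(mu \in Dg n) x mu * mon w mu.

Lemma le_deg (mu : midx) i : (mu i <= mdeg mu)%N.
Proof. by rewrite /mdeg (bigD1 i) //= leq_addr. Qed.

Definition castm n (m : {ffun 'I_d -> 'I_n.+1}) : midx := [ffun i => (m i : nat)].

Lemma castm_surj n (mu : midx) : mdeg mu = n ->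
  exists m : {ffun 'I_d -> 'I_n.+1}, castm m = mu.
Proof.
move=> dmu; exists [ffun i => inord (mu i)]; apply/ffunP => i.
by rewrite !ffunE inordK // ltnS -dmu le_deg.
Qed.

Lemma finDg n : finite_set (Dg n).
Proof.
apply: (@sub_finite_set _ _ ((@castm n) @` setT)); last first.
  by apply: finite_image; exact: finite_finset.
by move=> mu /= /castm_surj [m <-]; exists m.
Qed.

Lemma hom_partE (a : midx -> R) (z0 z : pt R d) n :
  hom_part a z0 z n = gs a (fun i => z i - z0 i) n.
Proof.
rewrite /hom_part bigfs ?index_enum_uniq //; last by move=> i _; rewrite mem_index_enum.
rewrite /gs; symmetry; apply: (reindex_fsbig (@castm n)).
split.
- move=> m /= /eqP h; rewrite /Dg /mdeg /castm /= -[X in _ = X]h.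
  by apply: eq_bigr => i _; rewrite ffunE.
- move=> m1 m2 _ _ /ffunP h; apply/ffunP => i; apply/val_inj.
  by have := h i; rewrite !ffunE.
- move=> mu /= dmu; have [m em] := castm_surj dmu; exists m => //.
  rewrite /in_mem /=; apply/eqP; rewrite -[RHS]dmu -em /mdeg /castm.
  by apply: eq_bigr => i _; rewrite ffunE.
Qed.


Definition addk (mu : midx) i k : midx :=
  [ffun l => if l == i then (mu l + k)%N else mu l].
Definition subk (mu : midx) i k : midx :=
  [ffun l => if l == i then (mu l - k)%N else mu l].

Lemma mdeg_addk (mu : midx) i k : mdeg (addk mu i k) = (mdeg mu + k)%N.
Proof.
rewrite /mdeg (bigD1 i) //= [in RHS](bigD1 i) //= ffunE eqxx.
rewrite -addnA [(k + _)%N]addnC addnA; congr (_ + _)%N; congr (_ + _)%N.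
by apply: eq_bigr => l /negbTE nl; rewrite ffunE nl.
Qed.

Lemma mon_addk w (mu : midx) i k : mon w (addk mu i k) = w i ^+ k * mon w mu.
Proof.
rewrite /mon (bigD1 i) //= [in RHS](bigD1 i) //= ffunE eqxx exprD.
rewrite mulrA [w i ^+ k * _]mulrC; congr (_ * _ * _).
by apply: eq_bigr => l /negbTE nl; rewrite ffunE nl.
Qed.

Lemma subkK (mu : midx) i k : (k <= mu i)%N -> addk (subk mu i k) i k = mu.
Proof.
move=> kmu; apply/ffunP => l; rewrite !ffunE; case: eqP => [->|//].
by rewrite subnK.
Qed.

Lemma addkK (mu : midx) i k : subk (addk mu i k) i k = mu.
Proof.
apply/ffunP => l; rewrite !ffunE; case: eqP => [->|//].
by rewrite addnK.
Qed.

Lemma gs_shift x w n i k : (k <= n)%N ->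
  \sum_(mu \in Dg n) ((if (k <= mu i)%N then x (subk mu i k) else 0) * mon w mu)
  = w i ^+ k * gs x w (n - k).
Proof.
move=> kn; rewrite /gs mulr_fsumr.
have -> : \sum_(mu \in Dg n)
   ((if (k <= mu i)%N then x (subk mu i k) else 0) * mon w mu) =
   \sum_(mu \in Dg n `&` [set mu : midx | (k <= mu i)%N]) (x (subk mu i k) * mon w mu).
  rewrite fsbig_mkcondr; apply: eq_fsbigr => mu _.
  have -> : (mu \in [set mu0 : midx | (k <= mu0 i)%N]) = (k <= mu i)%N.
    by apply/idP/idP => [/set_mem //| h]; exact: mem_set.
  by case: ifP => _; rewrite ?mul0r.
have -> : Dg n `&` [set mu : midx | (k <= mu i)%N] = (fun nu => addk nu i k) @` Dg (n - k).
  apply/seteqP; split.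
  - move=> mu [/= dmu kmu]; exists (subk mu i k); last exact: subkK.
    rewrite /Dg /=; apply/eqP; rewrite -(eqn_add2r k) -(mdeg_addk _ i) subkK //.
    by rewrite subnK // dmu.
  - move=> _ [nu dnu <-]; split; first by rewrite /Dg /= mdeg_addk dnu subnK.
    by rewrite /= ffunE eqxx leq_addl.
rewrite fsbig_image; last by move=> u v _ _ /(congr1 (fun m => subk m i k)); rewrite !addkK.
apply: eq_fsbigr => nu _; rewrite addkK mon_addk; ring.
Qed.


Definition aconv (c : 'I_d -> R) (e : nat -> R) (x : midx -> R) (mu : midx) : R :=
  \sum_(i < d) c i * \sum_(1 <= k < (mu i).+1) e k * x (subk mu i k).

Lemma gs_conv c e x w n :
  gs (aconv c e x) w n =
  \sum_(i < d) c i * \sum_(1 <= k < n.+1) e k * (w i ^+ k * gs x w (n - k)).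
Proof.
rewrite /gs.
transitivity (\sum_(mu \in Dg n) \sum_(i < d) \sum_(1 <= k < n.+1)
  (c i * e k * ((if (k <= mu i)%N then x (subk mu i k) else 0) * mon w mu))).
  apply: eq_fsbigr => mu /set_mem dmu.
  rewrite /aconv mulr_suml; apply: eq_bigr => i _.
  have hmu : ((mu i).+1 <= n.+1)%N by rewrite ltnS -dmu le_deg.
  rewrite [RHS](@big_cat_nat _ _ _ (mu i).+1) //=.
  rewrite [X in _ = _ + X]big_nat_cond [X in _ = _ + X]big1 ?addr0; last first.
    move=> k; rewrite andbT => /andP[h _]; rewrite leqNgt h /=; ring.
  rewrite -mulrA mulr_suml mulr_sumr; apply: eq_big_nat => k /andP[_ h].
  rewrite ltnS in h; rewrite h; ring.
rewrite fsbig_finite /=; last exact: finDg.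
under [RHS]eq_bigr do rewrite mulr_sumr.
rewrite exchange_big /=; apply: eq_bigr => i _.
rewrite exchange_big /=; apply: eq_big_nat => k /andP[_ h]; rewrite ltnS in h.
rewrite -gs_shift // fsbig_finite /=; last exact: finDg.
by rewrite mulrA mulr_sumr; apply: eq_bigr => mu _; rewrite mulrA.
Qed.


Lemma esum_graded (F : midx -> R) : (forall mu, 0 <= F mu) ->
  (\esum_(mu in [set: midx]) (F mu)%:E =
   \sum_(n <oo) (\sum_(mu \in Dg n) F mu)%:E)%E.
Proof.
move=> F0.
have -> : [set: midx] = \bigcup_(n in [set: nat]) Dg n.
  by apply/seteqP; split => // mu _; exists (mdeg mu).
rewrite esum_bigcupT //; last first.
  by move=> n m _ _ [mu [/= h1 h2]]; rewrite -h1 -h2.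
rewrite nneseries_esumT; last by move=> n; rewrite lee_fin; apply: fsumr_ge0.
apply: eq_esum => n _; rewrite esum_fset; last 2 first.
- exact: finDg.
- by move=> mu _; rewrite lee_fin.
by rewrite fsumEFin //; exact: finDg.
Qed.


Lemma gsE x w n : gs x w n = \sum_(mu <- finmap.enum_fset (fset_set (Dg n))) x mu * mon w mu.
Proof. by rewrite /gs fsbig_finite //; exact: finDg. Qed.

Lemma gsB x y w n :
  gs (fun mu => x mu - y mu) w n = gs x w n - gs y w n.
Proof. by rewrite !gsE -sumrB; apply: eq_bigr => mu _; rewrite mulrBl. Qed.

Lemma gsD x y w n :
  gs (fun mu => x mu + y mu) w n = gs x w n + gs y w n.
Proof. by rewrite !gsE -big_split; apply: eq_bigr => mu _; rewrite mulrDl. Qed.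

Lemma mon_ge0 w mu : (forall i, 0 <= w i) -> 0 <= mon w mu.
Proof. by move=> w0; apply: prodr_ge0 => i _; apply: exprn_ge0. Qed.

Lemma mon_norm w mu : `|mon w mu| = mon (fun i => `|w i|) mu.
Proof. by rewrite /mon normr_prod; apply: eq_bigr => i _; rewrite normrX. Qed.

Lemma mon_le w w' mu : (forall i, 0 <= w i <= w' i) -> mon w mu <= mon w' mu.
Proof.
move=> ww; apply: ler_prod => i _; have /andP[h1 h2] := ww i.
apply/andP; split; first exact: exprn_ge0.
by apply: lerXn2r => //; rewrite nnegrE //; exact: le_trans h2.
Qed.

Lemma gs_norm x w n :
  `|gs x w n| <= gs (fun mu => `|x mu|) (fun i => `|w i|) n.
Proof.
rewrite !gsE; apply: le_trans (ler_norm_sum _ _ _) _.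
by apply: ler_sum => mu _; rewrite normrM mon_norm.
Qed.

Lemma gs_ler x y w w' n : (forall mu, 0 <= x mu <= y mu) ->
  (forall i, 0 <= w i <= w' i) -> gs x w n <= gs y w' n.
Proof.
move=> xy ww; rewrite !gsE; apply: ler_sum => mu _.
have /andP[h1 h2] := xy mu.
apply: ler_pM => //; first by apply: mon_ge0 => i; have /andP[] := ww i.
exact: mon_le.
Qed.

Lemma gs_ge0 x w n : (forall mu, 0 <= x mu) -> (forall i, 0 <= w i) -> 0 <= gs x w n.
Proof.
move=> x0 w0; rewrite gsE; apply: sumr_ge0 => mu _.
by apply: mulr_ge0 => //; exact: mon_ge0.
Qed.

Lemma gs_hom x w t n :
  gs x (fun i => t * w i) n = t ^+ n * gs x w n.
Proof.
rewrite /gs mulr_fsumr; apply: eq_fsbigr => mu /set_mem dmu.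
rewrite /mon.
under eq_bigr do rewrite exprMn.
rewrite big_split /= prodrXr.
by rewrite -/(mdeg mu) dmu; ring.
Qed.

Definition mu0 : midx := [ffun => 0%N].

Lemma mdeg0 (mu : midx) : mdeg mu = 0%N -> mu = mu0.
Proof.
move=> /eqP; rewrite /mdeg sum_nat_eq0 => /forallP h.
by apply/ffunP => i; rewrite ffunE; apply/eqP; have := h i.
Qed.

Lemma mon_mu0 w : mon w mu0 = 1.
Proof. by rewrite /mon big1 // => i _; rewrite ffunE expr0. Qed.

Lemma mdeg_mu0 : mdeg mu0 = 0%N.
Proof. by rewrite /mdeg big1 // => i _; rewrite ffunE. Qed.

Lemma gs_single x w n (m : midx) : mdeg m = n ->
  (forall mu, Dg n mu -> mu != m -> x mu = 0) -> gs x w n = x m * mon w m.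
Proof.
move=> dm xm; rewrite /gs (fsbigD1 m) /=; last by [].
- by rewrite fsbig1 ?addr0 // => mu [/= h1 /eqP h2]; rewrite xm // ?mul0r //; exact/eqP.
- exact: finDg.
Qed.

Lemma gs_0 x w : gs x w 0 = x mu0.
Proof.
rewrite (@gs_single x w 0 mu0) ?mon_mu0 ?mulr1 //; first exact: mdeg_mu0.
by move=> mu /mdeg0 ->; rewrite eqxx.
Qed.

End Comb.


Section OneD.
Variable R : realType.

Lemma tri_sum (f : nat -> nat -> R) N :
  \sum_(n < N) \sum_(k < n.+1) f k (n - k)%N =
  \sum_(k < N) \sum_(m < N - k) f k m.
Proof.
elim: N => [|N IH]; first by rewrite !big_ord0.
rewrite big_ord_recr /= IH.
have -> : \sum_(k < N.+1) \sum_(m < N.+1 - k) f k m =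
   \sum_(k < N.+1) (\sum_(m < N - k) f k m + f k (N - k)%N).
  apply: eq_bigr => k _; have hk : (k <= N)%N by rewrite -ltnS.
  by rewrite subSn // big_ord_recr.
rewrite big_split /=; congr (_ + _).
by rewrite big_ord_recr /= subnn big_ord0 addr0.
Qed.

Lemma tri_sq (f : nat -> nat -> R) N :
  \sum_(k < N) \sum_(m < N - k) f k m =
  \sum_(k < N) \sum_(m < N) (if (k + m < N)%N then f k m else 0).
Proof.
apply: eq_bigr => k _.
rewrite (big_ord_widen N (fun m => f k m)) ?leq_subr // big_mkcond /=.
by apply: eq_bigr => m _; rewrite ltn_subRL.
Qed.

Definition cprod (x y : R^nat) : R^nat :=
  fun n => \sum_(k < n.+1) x k * y (n - k)%N.

Lemma series_cauchy (x y : R^nat) N :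
  series (cprod x y) N =
  \sum_(k < N) \sum_(m < N) (if (k + m < N)%N then x k * y m else 0).
Proof.
by rewrite /series /= big_mkord /cprod (tri_sum (fun k m => x k * y m)) (tri_sq (fun k m => x k * y m)).
Qed.

Lemma seriesM (x y : R^nat) N :
  series x N * series y N = \sum_(k < N) \sum_(m < N) x k * y m.
Proof.
rewrite /series /= !big_mkord mulr_suml; apply: eq_bigr => k _.
by rewrite mulr_sumr.
Qed.

Lemma series_sq_tri (x y : R^nat) N :
  series x N * series y N - series (cprod x y) N =
  \sum_(k < N) \sum_(m < N) (if (k + m < N)%N then 0 else x k * y m).
Proof.
rewrite seriesM series_cauchy -sumrB; apply: eq_bigr => k _.
rewrite -sumrB; apply: eq_bigr => m _.
by case: ifP => _; rewrite ?subrr ?subr0.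
Qed.


Lemma nd_series (u : R^nat) : (forall n, 0 <= u n) -> nondecreasing_seq (series u).
Proof. by move=> u0; apply: (@nondecreasing_series _ u xpredT 0) => n _ _; exact: u0. Qed.

Lemma sum_widen_le (F : nat -> R) N M : (forall k, 0 <= F k) -> (N <= M)%N ->
  \sum_(k < N) F k <= \sum_(k < M) F k.
Proof.
move=> F0 NM; have := nd_series F0 NM; rewrite /series /=.
by rewrite !big_mkord.
Qed.

Lemma series_le_lim (u : R^nat) (U : R) : (forall n, 0 <= u n) ->
  series u @ \oo --> U -> forall N, series u N <= U.
Proof.
move=> u0 cu N; rewrite -(cvg_lim _ cu) //.
by apply: nondecreasing_cvgn_le; [exact: nd_series | apply/cvg_ex; exists U].
Qed.

Lemma mertens_nn (u v : R^nat) (U V : R) : (forall n, 0 <= u n) -> (forall n, 0 <= v n) ->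
  series u @ \oo --> U -> series v @ \oo --> V ->
  series (cprod u v) @ \oo --> U * V.
Proof.
move=> u0 v0 cu cv.
have c0 n : 0 <= cprod u v n.
  by apply: sumr_ge0 => k _; apply: mulr_ge0.
have CP N : series (cprod u v) N <= series u N * series v N.
  rewrite -subr_ge0 series_sq_tri; apply: sumr_ge0 => k _; apply: sumr_ge0 => m _.
  by case: ifP => _ //; apply: mulr_ge0.
have PUV N : series u N * series v N <= U * V.
  apply: ler_pM; rewrite ?series_le_lim //; apply: sumr_ge0 => k _ //.
have PC N : series u N * series v N <= series (cprod u v) (N + N)%N.
  rewrite seriesM series_cauchy.
  apply: le_trans (_ : \sum_(k < N) \sum_(m < N + N)
     (if (k + m < N + N)%N then u k * v m else 0) <= _); last first.
    apply: (sum_widen_le (F := fun k => \sum_(m < N + N)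
     (if (k + m < N + N)%N then u k * v m else 0))); last exact: leq_addr.
    move=> k; apply: sumr_ge0 => m _; case: ifP => // _; exact: mulr_ge0.
  apply: ler_sum => k _.
  apply: le_trans (_ : \sum_(m < N) (if (k + m < N + N)%N then u k * v m else 0) <= _).
    by apply: ler_sum => m _; rewrite ifT // -addSn leq_add // ltnW.
  apply: (sum_widen_le (F := fun m =>
     (if (k + m < N + N)%N then u k * v m else 0))); last exact: leq_addr.
  by move=> m; case: ifP => // _; exact: mulr_ge0.
have cC : cvgn (series (cprod u v)).
  apply: nondecreasing_is_cvgn; first by apply: nd_series.
  by exists (U * V) => _ [N _ <-]; apply: le_trans (CP N) (PUV N).
have LUV : limn (series (cprod u v)) = U * V.
  apply/eqP; rewrite eq_le; apply/andP; split.
    by apply: limr_le => //; apply: nearW => N; exact: le_trans (CP N) (PUV N).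
  have cP : (fun N => series u N * series v N) @ \oo --> U * V by apply: cvgM.
  rewrite -(cvg_lim _ cP) //; apply: limr_le; first by apply/cvg_ex; exists (U * V).
  apply: nearW => N; apply: le_trans (PC N) _.
  by apply: nondecreasing_cvgn_le => //; exact: nd_series.
by rewrite -LUV; exact: cC.
Qed.


Lemma mertens (x y : R^nat) (X Y : R) :
  series x @ \oo --> X -> series y @ \oo --> Y ->
  cvgn (series (fun n => `|x n|)) -> cvgn (series (fun n => `|y n|)) ->
  series (cprod x y) @ \oo --> X * Y.
Proof.
move=> cx cy cx' cy'.
pose x' := fun n => `|x n|; pose y' := fun n => `|y n|.
pose D N := series x N * series y N - series (cprod x y) N.
pose D' N := series x' N * series y' N - series (cprod x' y') N.
have hD' : D' @ \oo --> 0.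
  set X' := limn (series x'); set Y' := limn (series y').
  have hx : series x' @ \oo --> X' by exact: cx'.
  have hy : series y' @ \oo --> Y' by exact: cy'.
  have := cvgB (cvgM hx hy) (mertens_nn (u := x') (v := y')
     (fun n => normr_ge0 _) (fun n => normr_ge0 _) hx hy).
  by rewrite subrr => h; apply: h; exact: nbhs_filter.
have hD : D @ \oo --> 0.
  apply: (@squeeze_cvgr _ _ _ _ (fun N => - D' N) D') => //; last first.
    by rewrite -oppr0; apply: cvgN.
  apply: nearW => N; rewrite -ler_norml /D /D' !series_sq_tri.
  apply: le_trans (ler_norm_sum _ _ _) _; apply: ler_sum => k _.
  apply: le_trans (ler_norm_sum _ _ _) _; apply: ler_sum => m _.
  by case: ifP => _; rewrite ?normr0 // normrM.
have -> : series (cprod x y) = fun N => series x N * series y N - D N.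
  by apply/funext => N; rewrite /D; ring.
by rewrite -[X * Y]subr0; apply: cvgB => //; apply: cvgM.
Qed.


Lemma geo_bound (r : R) N : 0 <= r <= 1/8 -> \sum_(k < N) r ^+ k <= 8/7.
Proof.
move=> /andP[r0 r8]; elim: N => [|N IH]; first by rewrite big_ord0; lra.
rewrite big_ord_recl expr0.
have -> : \sum_(i < N) r ^+ (bump 0 i) = r * \sum_(i < N) r ^+ i.
  by rewrite mulr_sumr; apply: eq_bigr => i _; rewrite exprS.
have S0 : 0 <= \sum_(i < N) r ^+ i by apply: sumr_ge0 => i _; exact: exprn_ge0.
have : r * \sum_(i < N) r ^+ i <= 1/8 * (8/7) by apply: ler_pM.
lra.
Qed.

Lemma rec_bound (al : R^nat) (c r : R) : (forall n, 0 <= al n) -> 0 <= c ->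
  0 <= r <= 1/8 ->
  (forall n, al n <= c * r ^+ n +
     \sum_(k < n.+1) (if (k : nat) == 0%N then 0 else r ^+ k) * al (n - k)%N) ->
  forall N, \sum_(n < N) al n <= (4/3) * c.
Proof.
move=> al0 c0 r01 hal N.
have /andP[r0 r8] := r01.
pose u k := if k == 0%N then 0 else r ^+ k.
have u0 k : 0 <= u k by rewrite /u; case: eqP => _ //; exact: exprn_ge0.
set S := \sum_(n < N) al n.
have S0 : 0 <= S by apply: sumr_ge0.
have h1 : S <= c * \sum_(n < N) r ^+ n +
    \sum_(n < N) \sum_(k < n.+1) u k * al (n - k)%N.
  rewrite mulr_sumr -big_split /=; apply: ler_sum => n _; exact: hal.
rewrite (tri_sum (fun k m => u k * al m)) in h1.
have h2 : \sum_(k < N) \sum_(m < N - k) u k * al m <= (\sum_(k < N) u k) * S.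
  rewrite mulr_suml; apply: ler_sum => k _; rewrite -mulr_sumr.
  apply: ler_wpM2l => //; apply: (sum_widen_le (F := al)) => //; exact: leq_subr.
have h3 : \sum_(k < N) u k <= 1/7.
  apply: le_trans (_ : \sum_(k < N.+1) u k <= _).
    by apply: (sum_widen_le (F := u)).
  rewrite big_ord_recl /u /= add0r.
  have -> : \sum_(i < N) (if bump 0 i == 0%N then 0 else r ^+ bump 0 i) =
            r * \sum_(i < N) r ^+ i.
    by rewrite mulr_sumr; apply: eq_bigr => i _; rewrite exprS.
  have : r * \sum_(i < N) r ^+ i <= 1/8 * (8/7).
    by apply: ler_pM => //; [apply: sumr_ge0 => i _; exact: exprn_ge0 | exact: geo_bound].
  lra.
have h4 : c * \sum_(n < N) r ^+ n <= c * (8/7) by apply: ler_wpM2l => //; exact: geo_bound.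
have h5 : (\sum_(k < N) u k) * S <= 1/7 * S by apply: ler_wpM2r.
lra.
Qed.


Lemma pseries_uniq (q : R^nat) (K : R) :
  (forall N, \sum_(n < N) `|q n| <= K) ->
  (forall t, 0 < t <= 1 -> series (fun n => q n * t ^+ n) @ \oo --> 0) ->
  forall n, q n = 0.
Proof.
move=> qK qcv; have K0 : 0 <= K by have := qK 0%N; rewrite big_ord0.
elim/ltn_ind => k IH.
have key t : 0 < t <= 1 -> `|q k| * t ^+ k <= t ^+ k.+1 * K.
  move=> /andP[t0 t1].
  have tn n : (k < n)%N -> t ^+ n <= t ^+ k.+1.
    move=> kn; rewrite -(subnK kn) exprD; apply: ler_piMl.
      by apply: exprn_ge0; exact: ltW.
    by apply: exprn_ile1 => //; exact: ltW.
  have E N : (k < N)%N -> series (fun n => q n * t ^+ n) N =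
      q k * t ^+ k + \sum_(k.+1 <= n < N) q n * t ^+ n.
    move=> kN; rewrite /series /= (@big_cat_nat _ _ _ k.+1) //= big_nat_recr //=.
    by rewrite big1_seq ?add0r // => n /andP[_]; rewrite mem_index_iota => /andP[_] /IH ->; rewrite mul0r.
  have B N : `|\sum_(k.+1 <= n < N) q n * t ^+ n| <= t ^+ k.+1 * K.
    apply: le_trans (ler_norm_sum _ _ _) _.
    apply: le_trans (_ : \sum_(k.+1 <= n < N) `|q n| * t ^+ k.+1 <= _).
      apply: ler_sum_nat => n /andP[kn _].
      rewrite normrM (ger0_norm (exprn_ge0 _ (ltW t0))).
      by apply: ler_wpM2l => //; exact: tn.
    rewrite -mulr_suml mulrC; apply: ler_wpM2l; first by apply: exprn_ge0; exact: ltW.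
    have [kN|Nk] := leqP k.+1 N; last by rewrite big_geq ?(ltnW Nk) //.
    apply: le_trans (qK N); rewrite -(big_mkord xpredT (fun n => `|q n|)).
    rewrite (@big_cat_nat _ _ _ k.+1 0 N) //= lerDr; apply: sumr_ge0 => i _.
    exact: normr_ge0.
  have cs : series (fun n => q n * t ^+ n) @ \oo --> 0 by apply: qcv; rewrite t0 t1.
  have cg : (fun N => `|series (fun n => q n * t ^+ n) N| + t ^+ k.+1 * K) @ \oo -->
      0 + t ^+ k.+1 * K.
    apply: cvgD; last exact: cvg_cst.
    by rewrite -(@normr0 _ R); apply: cvg_norm.
  rewrite add0r in cg; rewrite -(cvg_lim _ cg) //; apply: limr_ge; first by apply/cvg_ex; eexists; exact: cg.
  near=> N; have kN : (k < N)%N by near: N; exact: nbhs_infty_gt.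
  have -> : `|q k| * t ^+ k = `|q k * t ^+ k|.
    by rewrite normrM (ger0_norm (exprn_ge0 _ (ltW t0))).
  have -> : q k * t ^+ k = series (fun n => q n * t ^+ n) N -
      \sum_(k.+1 <= n < N) q n * t ^+ n by rewrite (E N kN) addrK.
  by apply: le_trans (ler_normB _ _) _; apply: lerD.
apply/eqP/negPn/negP => qk0.
have a0 : 0 < `|q k| by rewrite normr_gt0.
set a := `|q k| in a0 key.
pose t := a / (a + K + 1).
have s0 : 0 < a + K + 1 by lra.
have ht : t * (a + K + 1) = a by rewrite /t mulfVK // gt_eqF.
have t0 : 0 < t by rewrite /t divr_gt0.
have t1 : t <= 1 by rewrite /t ler_pdivrMr // mul1r; lra.
have := key t; rewrite t0 t1 => /(_ isT).
have tk : 0 < t ^+ k by apply: exprn_gt0.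
rewrite (_ : t ^+ k.+1 * K = (t * K) * t ^+ k); last by rewrite exprS; ring.
rewrite ler_pM2r // => h; nra.
Unshelve. all: by end_near.
Qed.

End OneD.

Lemma digits_inj (B : nat) D (f g : nat -> nat) : (0 < B)%N ->
  (forall i, (i < D)%N -> (f i < B)%N) -> (forall i, (i < D)%N -> (g i < B)%N) ->
  (\sum_(i < D) f i * B ^ i = \sum_(i < D) g i * B ^ i)%N ->
  forall i, (i < D)%N -> f i = g i.
Proof.
elim: D f g => [|D IH] f g B0 fB gB; first by move=> _ i.
rewrite !big_ord_recl /= !expn0 !muln1.
have sh (h : nat -> nat) : (\sum_(i < D) h (bump 0 i) * B ^ bump 0 i =
     B * \sum_(i < D) h i.+1 * B ^ i)%N.
  rewrite big_distrr /=; apply: eq_bigr => i _.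
  by rewrite /bump /= add1n expnS mulnCA.
rewrite !sh => E.
have e0 : f 0%N = g 0%N.
  have := congr1 (modn^~ B) E.
  rewrite ![(_ + B * _)%N]addnC ![(B * _)%N]mulnC !modnMDl !modn_small //.
  - exact: gB.
  - exact: fB.
move: E; rewrite e0 => /addnI /eqP; rewrite eqn_pmul2l // => /eqP E.
move=> [|i] iD; first exact: e0.
apply: (IH (fun i => f i.+1) (fun i => g i.+1)) => //.
- by move=> k kD; apply: fB.
- by move=> k kD; apply: gB.
Qed.


Section Family.
Variables (R : realType) (d : nat) (j : 'I_d) (p : 'I_d -> R).
Local Notation midx := (midx d).

Definition ef (k : nat) : R := (k`!%:R)^-1.

Definition Pc (mu : midx) : R :=
  if [forall l, (l != j) ==> (mu l == 0%N)] then p j * ef (mu j) else 0.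

Fixpoint cf (N : nat) (mu : midx) : R :=
  if N is N'.+1 then Pc mu - aconv p ef (cf N') mu else Pc mu.

Definition af (mu : midx) : R := cf (mdeg mu) mu.

Lemma conv_ext c e (x y : midx -> R) (mu : midx) :
  (forall i k, (1 <= k <= mu i)%N -> x (subk mu i k) = y (subk mu i k)) ->
  aconv c e x mu = aconv c e y mu.
Proof.
move=> h; apply: eq_bigr => i _; congr (_ * _).
by apply: eq_big_nat => k /andP[k1 k2]; rewrite h // k1 -ltnS.
Qed.

Lemma conv_deg0 c e (x : midx -> R) (mu : midx) : mdeg mu = 0%N -> aconv c e x mu = 0.
Proof.
move=> /mdeg0 ->; rewrite /aconv big1 // => i _.
by rewrite ffunE big_geq ?mulr0.
Qed.

Lemma mdeg_subk (mu : midx) i k : (k <= mu i)%N -> mdeg (subk mu i k) = (mdeg mu - k)%N.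
Proof.
move=> kmu; rewrite -{2}(subkK kmu) mdeg_addk addnK //.
Qed.

Lemma cf_succ N (mu : midx) : (mdeg mu <= N)%N -> cf N.+1 mu = cf N mu.
Proof.
elim: N mu => [|N IH] mu hmu.
  have h0 : mdeg mu = 0%N by apply/eqP; rewrite -leqn0.
  by rewrite /= conv_deg0 // subr0.
rewrite [LHS]/= [RHS]/=; congr (_ - _); apply: conv_ext => i k /andP[k1 k2].
apply: IH; rewrite mdeg_subk // leq_subLR.
by apply: leq_trans hmu _; rewrite -add1n leq_add2r.
Qed.

Lemma cf_stable N (mu : midx) : (mdeg mu <= N)%N -> cf N mu = af mu.
Proof.
elim: N => [|N IH] hmu.
  have h0 : mdeg mu = 0%N by move: hmu; rewrite leqn0 => /eqP.
  by rewrite /af h0.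
rewrite leq_eqVlt in hmu; case/orP: hmu => [/eqP <-|hmu] //.
by rewrite cf_succ // IH.
Qed.

Lemma af_rec (mu : midx) : af mu = Pc mu - aconv p ef af mu.
Proof.
rewrite /af; case hm: (mdeg mu) => [|m] /=.
  by rewrite conv_deg0 // subr0.
congr (_ - _); apply: conv_ext => i k /andP[k1 k2].
apply: cf_stable; rewrite mdeg_subk // hm leq_subLR.
by rewrite -add1n leq_add2r.
Qed.

Lemma gs_Pc w n : gs Pc w n = p j * ef n * w j ^+ n.
Proof.
have dm : mdeg (addk (mu0 d) j n) = n by rewrite mdeg_addk mdeg_mu0.
rewrite (@gs_single _ _ _ _ n (addk (mu0 d) j n)) //.
  rewrite mon_addk mon_mu0 mulr1 /Pc ifT; last first.
    by apply/forallP => l; apply/implyP => /negbTE hl; rewrite !ffunE hl.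
  by rewrite !ffunE eqxx add0n.
move=> mu /= dmu; apply: contraNeq; rewrite /Pc; case: ifP; last by rewrite eqxx.
move/forallP => h _; apply/eqP/ffunP => l; rewrite !ffunE.
case: eqP => [->|/eqP hl]; last by have /implyP := h l; move=> /(_ hl) /eqP.
rewrite add0n -dmu /mdeg (bigD1 j) //= big1 ?addn0 //.
by move=> l' hl'; have /implyP := h l'; move=> /(_ hl') /eqP.
Qed.


Hypothesis p0 : forall i, 0 <= p i.
Hypothesis p1 : \sum_i p i = 1.

Lemma ef_ge0 k : 0 <= ef k.
Proof. by rewrite /ef invr_ge0. Qed.

Lemma ef_le1 k : ef k <= 1.
Proof. by rewrite /ef invf_le1 // ?ler1n ?ltr0n ?fact_gt0. Qed.

Lemma ef0 : ef 0 = 1.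
Proof. by rewrite /ef /= invr1. Qed.

Lemma gs_af w n : gs af w n = p j * ef n * w j ^+ n -
  \sum_(i < d) p i * \sum_(1 <= k < n.+1) ef k * (w i ^+ k * gs af w (n - k)).
Proof.
transitivity (gs (fun mu => Pc mu - aconv p ef af mu) w n).
  by congr gs; apply/funext => mu; exact: af_rec.
by rewrite gsB gs_Pc gs_conv.
Qed.

Lemma Pc_ge0 mu : 0 <= Pc mu.
Proof. by rewrite /Pc; case: ifP => _ //; apply: mulr_ge0 => //; exact: ef_ge0. Qed.

Lemma norm_af mu : `|af mu| <= Pc mu + aconv p ef (fun nu => `|af nu|) mu.
Proof.
rewrite af_rec; apply: le_trans (ler_normB _ _) _.
rewrite (ger0_norm (Pc_ge0 mu)) lerD2l.
apply: le_trans (ler_norm_sum _ _ _) _; apply: ler_sum => i _.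
rewrite normrM (ger0_norm (p0 i)); apply: ler_wpM2l => //.
apply: le_trans (ler_norm_sum _ _ _) _; apply: ler_sum => k _.
by rewrite normrM (ger0_norm (ef_ge0 k)).
Qed.

Definition al (w : 'I_d -> R) n := gs (fun mu => `|af mu|) (fun i => `|w i|) n.

Lemma al_rec w n : al w n <= p j * ef n * `|w j| ^+ n +
  \sum_(i < d) p i * \sum_(1 <= k < n.+1) ef k * (`|w i| ^+ k * al w (n - k)).
Proof.
rewrite /al -(gs_Pc (fun i => `|w i|)).
rewrite -(gs_conv p ef (fun nu => `|af nu|) (fun i => `|w i|)) -gsD.
apply: gs_ler => [mu|i].
  by rewrite normr_ge0 norm_af.
by rewrite normr_ge0 lexx.
Qed.

Lemma sum1_ord (F : nat -> R) n :
  \sum_(1 <= k < n.+1) F k = \sum_(k < n.+1) (if (k : nat) == 0%N then 0 else F k).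
Proof.
rewrite -(big_mkord xpredT (fun k => if k == 0%N then 0 else F k)).
rewrite big_ltn // eqxx add0r; apply: eq_big_nat => k /andP[k1 _].
by rewrite ifF //; apply/negbTE; rewrite -lt0n.
Qed.

Lemma al_rec2 w (r : R) n : (forall i, `|w i| <= r) -> 0 <= r ->
  al w n <= p j * r ^+ n +
     \sum_(k < n.+1) (if (k : nat) == 0%N then 0 else r ^+ k) * al w (n - k)%N.
Proof.
move=> wr r0; apply: le_trans (al_rec w n) _; apply: lerD.
  rewrite -mulrA; apply: ler_wpM2l => //.
  rewrite -[X in _ <= X]mul1r; apply: ler_pM; rewrite ?ef_ge0 ?ef_le1 ?exprn_ge0 //.
  by apply: lerXn2r; rewrite ?nnegrE.
have al0 m : 0 <= al w m by apply: gs_ge0 => *.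
apply: le_trans (_ : \sum_(i < d) p i * \sum_(1 <= k < n.+1) r ^+ k * al w (n - k) <= _).
  apply: ler_sum => i _; apply: ler_wpM2l => //; apply: ler_sum_nat => k _.
  rewrite mulrA; apply: ler_wpM2r => //; rewrite -[X in _ <= X]mul1r.
  apply: ler_pM; rewrite ?ef_ge0 ?ef_le1 ?exprn_ge0 //.
  by apply: lerXn2r; rewrite ?nnegrE.
by rewrite -mulr_suml p1 mul1r sum1_ord; apply: ler_sum => k _; case: eqP => _; rewrite ?mul0r.
Qed.

Lemma af_mu0 : af (mu0 d) = p j.
Proof.
by rewrite af_rec conv_deg0 ?mdeg_mu0 // subr0 /Pc ifT ?ffunE ?ef0 ?mulr1 //; apply/forallP => l; rewrite ffunE eqxx implybT.
Qed.

Lemma al0 w : al w 0 = p j.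
Proof. by rewrite /al gs_0 af_mu0 ger0_norm. Qed.

Lemma al_sum w (r : R) N : (forall i, `|w i| <= r) -> 0 <= r <= 1/8 ->
  \sum_(n < N) al w n <= (4/3) * p j.
Proof.
move=> wr /andP[r0 r8]; apply: (@rec_bound _ _ _ r) => //.
- by move=> n; apply: gs_ge0.
- by apply/andP; split.
- by move=> n; apply: al_rec2.
Qed.


Lemma cvg_fsum (I : Type) (s : seq I) (F : I -> nat -> R) (l : I -> R) :
  (forall i, F i @ \oo --> l i) ->
  (fun N => \sum_(i <- s) F i N) @ \oo --> \sum_(i <- s) l i.
Proof.
move=> hF; elim: s => [|i s IH].
  rewrite big_nil; under eq_cvg do rewrite big_nil; exact: cvg_cst.
rewrite big_cons; under eq_cvg do rewrite big_cons.
by apply: cvgD.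
Qed.

Lemma sum_split0 (F : nat -> R) n :
  \sum_(k < n.+1) F k = F 0%N + \sum_(1 <= k < n.+1) F k.
Proof. by rewrite -(big_mkord xpredT) big_ltn. Qed.

Definition Ee (x : R) : R^nat := fun k => ef k * x ^+ k.

Lemma series_Ee x : series (Ee x) @ \oo --> expR x.
Proof.
have -> : Ee x = exp_coeff x by apply/funext => k; rewrite /Ee /exp_coeff /= mulrC.
exact: is_cvg_series_exp_coeff.
Qed.

Lemma normed_Ee x : cvgn (series (fun n => `|Ee x n|)).
Proof.
have -> : (fun n => `|Ee x n|) = exp_coeff `|x|.
  apply/funext => k; rewrite /Ee /exp_coeff /= mulrC normrM normrX.
  by rewrite (ger0_norm (ef_ge0 k)).
exact: is_cvg_series_exp_coeff.
Qed.

Lemma gs_af_cprod w n :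
  \sum_(i < d) p i * cprod (Ee (w i)) (gs af w) n = p j * Ee (w j) n.
Proof.
rewrite /cprod /=.
under eq_bigr => i _ do rewrite (sum_split0 (fun k => Ee (w i) k * gs af w (n - k)))
  /Ee ef0 expr0 mul1r subn0 mulrDr.
rewrite big_split /= -mulr_suml p1 mul1r.
have := gs_af w n; rewrite /Ee mulrA => ->.
rewrite mul1r (_ : \sum_(i < d) p i * \sum_(1 <= k < n.+1) ef k * w i ^+ k * gs af w (n - k)
  = \sum_(i < d) p i * \sum_(1 <= k < n.+1) ef k * (w i ^+ k * gs af w (n - k))).
  by rewrite subrK.
by apply: eq_bigr => i _; congr (_ * _); apply: eq_big_nat => k _; rewrite mulrA.
Qed.

Lemma af_value w : (forall i, `|w i| <= 1/8) ->
  series (gs af w) @ \oo --> p j * expR (w j) / \sum_(i < d) p i * expR (w i).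
Proof.
move=> w8.
set A := gs af w.
have cA' : cvgn (series (fun n => `|A n|)).
  apply: nondecreasing_is_cvgn; first by apply: nd_series => n.
  exists ((4/3) * p j) => _ [N _ <-].
  apply: le_trans (al_sum (w := w) (r := 1/8) N _ _) => //; last by lra.
  rewrite /series /= big_mkord; apply: ler_sum => n _; exact: gs_norm.
have cA : cvgn (series A) by apply: normed_cvg.
set L := limn (series A).
have hL : series A @ \oo --> L by exact: cA.
have hE i : series (cprod (Ee (w i)) A) @ \oo --> expR (w i) * L.
  by apply: mertens => //; [exact: series_Ee | exact: normed_Ee].
have h1 : (fun N => \sum_(i < d) p i * series (cprod (Ee (w i)) A) N) @ \oo -->
   \sum_(i < d) p i * (expR (w i) * L).
  by apply: cvg_fsum => i; apply: cvgMl_tmp; exact: hE.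
have h2 : (fun N => \sum_(i < d) p i * series (cprod (Ee (w i)) A) N) =
    series (fun n => p j * Ee (w j) n).
  apply/funext => N; rewrite /series /=.
  under eq_bigr do rewrite mulr_sumr.
  rewrite exchange_big /=; apply: eq_bigr => n _; exact: gs_af_cprod.
have h3 : series (fun n => p j * Ee (w j) n) @ \oo --> p j * expR (w j).
  have -> : series (fun n => p j * Ee (w j) n) = fun N => p j * series (Ee (w j)) N.
    by apply/funext => N; rewrite /series /= mulr_sumr.
  by apply: cvgMl_tmp; exact: series_Ee.
rewrite h2 in h1.
have eqL : \sum_(i < d) p i * (expR (w i) * L) = p j * expR (w j).
  by rewrite -(cvg_lim _ h1) // -(cvg_lim _ h3).
have S0 : 0 < \sum_(i < d) p i * expR (w i).
  rewrite lt_neqAle sumr_ge0 ?andbT; last by move=> i _; rewrite mulr_ge0 // expR_ge0.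
  apply/eqP => /esym/eqP; rewrite psumr_eq0; last by move=> i _; rewrite mulr_ge0 // expR_ge0.
  move=> /allP h; have : \sum_i p i = 0.
    apply: big1 => i _; have /eqP := h i (mem_index_enum _).
    by move/eqP; rewrite mulf_eq0 expR_eq0 orbF => /eqP.
  by rewrite p1 => /eqP; rewrite oner_eq0.
have -> : p j * expR (w j) / \sum_(i < d) p i * expR (w i) = L.
  rewrite -eqL; under eq_bigr do rewrite mulrA.
  by rewrite -mulr_suml mulrAC mulfV ?mul1r // gt_eqF.
exact: hL.
Qed.

End Family.


Section Kron.
Variables (R : realType) (d : nat).
Local Notation midx := (midx d).

Definition enc (B : nat) (mu : midx) : nat := (\sum_(i < d) mu i * B ^ i)%N.

Definition fmu (mu : midx) (k : nat) : nat :=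
  if insub k is Some i then mu i else 0%N.

Lemma fmuE (mu : midx) (i : 'I_d) : fmu mu i = mu i.
Proof. by rewrite /fmu valK. Qed.

Lemma enc_inj n (mu nu : midx) : Dg n mu -> Dg n nu ->
  enc n.+1 mu = enc n.+1 nu -> mu = nu.
Proof.
move=> dmu dnu E; apply/ffunP => i.
have h : forall k, (k < d)%N -> fmu mu k = fmu nu k.
  apply: (@digits_inj n.+1) => //.
  - move=> k kd; rewrite /fmu insubT /=; rewrite ltnS -dmu; exact: le_deg.
  - move=> k kd; rewrite /fmu insubT /=; rewrite ltnS -dnu; exact: le_deg.
  - rewrite /enc in E; rewrite (eq_bigr (fun i => mu i * n.+1 ^ i)%N).
      rewrite E; apply: eq_bigr => k _; by rewrite fmuE.
    by move=> k _; rewrite fmuE.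
by rewrite -!fmuE h.
Qed.

Lemma mon_kron (x : R) B (mu : midx) :
  mon (fun i => x ^+ (B ^ i)) mu = x ^+ enc B mu.
Proof.
rewrite /mon /enc -prodrXr; apply: eq_bigr => i _.
by rewrite -exprM mulnC.
Qed.


Lemma gs_zero_coef (c : midx -> R) n (rho : R) : 0 < rho ->
  (forall v, (forall i, `|v i| < rho) -> gs c v n = 0) ->
  forall mu, Dg n mu -> c mu = 0.
Proof.
move=> rho0 hv mu dmu.
pose s := finmap.enum_fset (fset_set (@Dg d n)).
pose Q : {poly R} := \sum_(nu <- s) c nu *: 'X^(enc n.+1 nu).
set m := Num.min rho 1.
have m0 : 0 < m by rewrite lt_min rho0 ltr01.
have mr : m <= rho by rewrite ge_min lexx.
have m1 : m <= 1 by rewrite ge_min lexx orbT.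
have HQ x : 0 < x < m -> Q.[x] = 0.
  move=> /andP[x0 xm].
  have hb : forall i, `|x ^+ (n.+1 ^ i)| < rho.
    move=> i; rewrite normrX ger0_norm ?(ltW x0) //.
    apply: le_lt_trans (_ : x < rho); last exact: lt_le_trans xm mr.
    rewrite -[leRHS]expr1; apply: ler_wiXn2l; [exact: ltW | exact: ltW (lt_le_trans xm m1) |].
    by rewrite expn_gt0.
  have := hv _ hb; rewrite gsE => <-.
  by rewrite /Q horner_sum; apply: eq_bigr => nu _; rewrite hornerZ hornerXn mon_kron.
have Q0 : Q = 0.
  apply/eqP; apply/negPn/negP => nQ.
  pose rs := [seq m / (k.+2)%:R | k <- iota 0 (size Q)].
  suff : (size rs < size Q)%N by rewrite size_map size_iota ltnn.
  apply: (max_poly_roots nQ).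
  - apply/allP => _ /mapP [k _ ->]; apply/rootP; apply: HQ.
    have k2 : 0 < (k.+2)%:R :> R by rewrite ltr0n.
    rewrite divr_gt0 //= ltr_pdivrMr // ltr_pMr // ltr1n //.
  - rewrite map_inj_uniq ?iota_uniq // => k l /(mulfI (lt0r_neq0 m0)) /invr_inj /eqP.
    by rewrite eqr_nat => /eqP [].
have : Q`_(enc n.+1 mu) = c mu.
  rewrite /Q coef_sum (bigD1_seq mu) /=; last 2 first.
  - by rewrite in_fset_set ?inE //; exact: finDg.
  - exact: finmap.fset_uniq.
  rewrite coefZ coefXn eqxx mulr1 big1_seq ?addr0 // => nu /andP[nmu nus].
  rewrite coefZ coefXn; case: eqP => [E|]; last by rewrite mulr0.
  suff : nu = mu by move/eqP; rewrite (negbTE nmu).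
  apply: (@enc_inj n) => //.
  by move: nus; rewrite in_fset_set; [move/set_mem | exact: finDg].
by rewrite Q0 coef0 => <-.
Qed.


Lemma le_fine (r : R) (e : \bar R) : (e < +oo)%E -> (r%:E <= e)%E -> r <= fine e.
Proof. by case: e => [e'| |] //= _; rewrite ?lee_fin // leeNy_eq. Qed.

Lemma abs_sum_graded (a : midx -> R) (z0 z : pt R d) :
  abs_sum a z0 z [set: midx] =
  (\sum_(n <oo) (gs (fun mu => `|a mu|) (fun i => `|z i - z0 i|) n)%:E)%E.
Proof.
rewrite /abs_sum esum_graded //.
by move=> mu; apply: mulr_ge0 => //; apply: mon_ge0.
Qed.

Lemma partial_le_abs (a : midx -> R) (z0 z : pt R d) N : abs_conv a z0 z ->
  \sum_(n < N) gs (fun mu => `|a mu|) (fun i => `|z i - z0 i|) n <=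
  fine (abs_sum a z0 z [set: midx]).
Proof.
move=> ac; apply: le_fine => //.
rewrite abs_sum_graded -sumEFin.
have := @nneseries_lim_ge R (fun n => (gs (fun mu => `|a mu|) (fun i => `|z i - z0 i|) n)%:E) xpredT 0 N.
rewrite big_mkord; apply => n _ _; rewrite lee_fin; apply: gs_ge0 => *; exact: normr_ge0.
Qed.

Lemma ps_unique (U : set (pt R d)) (f : pt R d -> R) z0 (a b : midx -> R) :
  is_power_series_at U f z0 a -> is_power_series_at U f z0 b -> a = b.
Proof.
move=> [ra ra0 ha] [rb rb0 hb].
set rho := Num.min ra rb.
have rho0 : 0 < rho by rewrite lt_min ra0 rb0.
have rhoa : rho <= ra by rewrite ge_min lexx.
have rhob : rho <= rb by rewrite ge_min lexx orbT.
pose c mu := a mu - b mu.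
suff hc : forall n v, (forall i, `|v i| < rho) -> gs c v n = 0.
  apply/funext => mu; apply/eqP; rewrite -subr_eq0; apply/eqP.
  by apply: (@gs_zero_coef c (mdeg mu) rho rho0) => // v hv; exact: hc.
move=> n v hv.
pose zt (t : R) : pt R d := fun i => z0 i + t * v i.
have ztE t : (fun i => zt t i - z0 i) = (fun i => t * v i).
  by apply/funext => i; rewrite /zt addrAC subrr add0r.
have ztb t : 0 <= t <= 1 -> forall i, `|zt t i - z0 i| < rho.
  move=> /andP[t0 t1] i; rewrite /zt addrAC subrr add0r normrM ger0_norm //.
  apply: le_lt_trans (hv i); rewrite -[leRHS]mul1r; apply: ler_wpM2r => //.
have hz1 : forall i, `|zt 1 i - z0 i| < rho by apply: ztb; rewrite ler01 lexx.
have [_ [acA _]] := ha (zt 1) (fun i => lt_le_trans (hz1 i) rhoa).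
have [_ [acB _]] := hb (zt 1) (fun i => lt_le_trans (hz1 i) rhob).
pose K := fine (abs_sum a z0 (zt 1) [set: midx]) + fine (abs_sum b z0 (zt 1) [set: midx]).
apply: (@pseries_uniq _ (fun n => gs c v n) K).
  move=> N; apply: le_trans (_ : \sum_(n < N)
    (gs (fun mu => `|a mu|) (fun i => `|zt 1 i - z0 i|) n +
     gs (fun mu => `|b mu|) (fun i => `|zt 1 i - z0 i|) n) <= _); last first.
    by rewrite big_split /=; apply: lerD; apply: partial_le_abs.
  apply: ler_sum => k _; rewrite /c gsB.
  apply: le_trans (ler_normB _ _) _.
  have ew : (fun i => `|zt 1 i - z0 i|) = (fun i => `|v i|).
    by apply/funext => i; rewrite /zt addrAC subrr add0r mul1r.
  by rewrite ew; apply: lerD; exact: gs_norm.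
move=> t /andP[t0 t1].
have hzt : forall i, `|zt t i - z0 i| < rho by apply: ztb; rewrite ltW.
have [_ [_ cA]] := ha (zt t) (fun i => lt_le_trans (hzt i) rhoa).
have [_ [_ cB]] := hb (zt t) (fun i => lt_le_trans (hzt i) rhob).
have -> : series (fun n => gs c v n * t ^+ n) =
   (fun N => \sum_(n < N) hom_part a z0 (zt t) n - \sum_(n < N) hom_part b z0 (zt t) n).
  apply/funext => N; rewrite /series /= big_mkord.
  rewrite -sumrB; apply: eq_bigr => k _.
  by rewrite !hom_partE ztE !gs_hom /c gsB; ring.
rewrite -[X in _ --> X](subrr (f (zt t))); apply: cvgB; [exact: cA | exact: cB].
Qed.

End Kron.


Section Final.
Variables (R : realType) (d : nat).
Local Notation midx := (midx d).

Lemma nneseries_bound (x : nat -> R) (c : R) : (forall n, 0 <= x n) ->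
  (forall N, \sum_(n < N) x n <= c) -> (\sum_(n <oo) (x n)%:E <= c%:E)%E.
Proof.
move=> x0 hx; apply: lime_le.
  by apply: is_cvg_nneseries => n _ _; rewrite lee_fin.
by apply: nearW => N; rewrite sumEFin lee_fin big_mkord.
Qed.

Lemma abs_sum_pos (a : midx -> R) (z0 z : pt R d) :
  abs_sum a z0 z [set mu | (0 < mdeg mu)%N] =
  (\sum_(n <oo) (if n == 0%N then 0
     else gs (fun mu => `|a mu|) (fun i => `|z i - z0 i|) n)%:E)%E.
Proof.
rewrite /abs_sum esum_mkcond.
set G := fun mu : midx => if (0 < mdeg mu)%N then `|a mu| * amono z0 z mu else 0.
rewrite (eq_esum (b := fun mu => (G mu)%:E)); last first.
  move=> mu _.
  have -> : (mu \in [set mu : midx | (0 < mdeg mu)%N]) = (0 < mdeg mu)%N.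
    by apply/idP/idP => [/set_mem //|h]; exact: mem_set.
  by rewrite /G; case: ifP.
rewrite esum_graded; last first.
  move=> mu; rewrite /G; case: ifP => _ //; apply: mulr_ge0 => //.
  exact: mon_ge0.
apply: eq_eseriesr => n _; congr (_%:E).
case: (eqVneq n 0%N) => [->|n0].
  by rewrite fsbig1 // => mu /= dmu; rewrite /G dmu.
rewrite /gs; apply: eq_fsbigr => mu /set_mem /= dmu.
by rewrite /G ifT // dmu lt0n.
Qed.

End Final.

Theorem mainTheorem10 (R : realType) (d : nat) (hd : (1 <= d)%N) (j : 'I_d) :
  analytic_type [set: 'I_d -> R]
    (fun _ => 1 / (2 * expR 2)) (fun _ => 1) (smax j).
Proof.
have Spos (z : pt R d) : 0 < \sum_(l < d) expR (z l).
  apply: lt_le_trans (expR_gt0 (z j)) _; rewrite (bigD1 j) //= lerDl.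
  by apply: sumr_ge0 => *; exact: expR_ge0.
pose pz (z0 : pt R d) i := expR (z0 i) / \sum_(l < d) expR (z0 l).
have pz0 z0 i : 0 <= pz z0 i by apply: divr_ge0; [exact: expR_ge0 | exact: ltW].
have pz1 z0 : \sum_i pz z0 i = 1 by rewrite -mulr_suml mulfV // gt_eqF.
have pzj z0 : pz z0 j <= 1.
  by rewrite -(pz1 z0) (bigD1 j) //= lerDl; apply: sumr_ge0 => *.
have key z0 (z : pt R d) : (forall i, `|z i - z0 i| <= 1/8) ->
    abs_conv (af j (pz z0)) z0 z /\
    (abs_sum (af j (pz z0)) z0 z [set mu | (0 < mdeg mu)%N] <= 1%:E)%E.
  move=> hz; set w := fun i => z i - z0 i.
  have hal N : \sum_(n < N) al j (pz z0) w n <= 4 / 3 * pz z0 j.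
    by apply: (@al_sum R d j (pz z0) (pz0 z0) (pz1 z0) w (1/8) N) => //; lra.
  have al_ge0 n : 0 <= al j (pz z0) w n by apply: gs_ge0 => *.
  split.
    rewrite /abs_conv abs_sum_graded.
    apply: le_lt_trans (nneseries_bound (c := 4 / 3 * pz z0 j) al_ge0 hal) _.
    exact: ltry.
  rewrite abs_sum_pos.
  apply: nneseries_bound => [n|N]; first by case: eqP => // _; exact: al_ge0.
  case: N => [|N]; first by rewrite big_ord0; lra.
  have := hal N.+1; rewrite !big_ord_recl eqxx add0r al0 //.
  rewrite (eq_bigr (fun i : 'I_N => al j (pz z0) w (bump 0 i))) //.
    have := pzj z0; lra.
have ps z0 : is_power_series_at [set: pt R d] (smax j) z0 (af j (pz z0)).
  exists (1/8); first by rewrite divr_gt0.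
  move=> z hz; split => //; split; first by case: (key z0 z (fun i => ltW (hz i))).
  set w := fun i => z i - z0 i.
  have := af_value (pz0 z0) (pz1 z0) (w := w) (fun i => ltW (hz i)).
  have -> : (fun N => \sum_(n < N) hom_part (af j (pz z0)) z0 z n) =
      series (gs (af j (pz z0)) w).
    by apply/funext => N; rewrite /series /= big_mkord; apply: eq_bigr => n _; exact: hom_partE.
  move=> /(_ j) h.
  have e i : pz z0 i * expR (w i) = expR (z i) / \sum_(l < d) expR (z0 l).
    rewrite /pz /w expRB; field.
    by rewrite expR_eq0 gt_eqF // Spos.
  have E : pz z0 j * expR (w j) / \sum_(i < d) pz z0 i * expR (w i) = smax j z.
    under eq_bigr do rewrite e.
    rewrite e -mulr_suml /smax; field.
    by rewrite !gt_eqF ?Spos.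
  by rewrite -E.
split.
  by move=> z0 _; exists (af j (pz z0)); exact: ps.
move=> z0 _ b hb z hz.
rewrite -(ps_unique (ps z0) hb).
apply: key => i; apply: le_trans (hz i) _.
have e1 : 2 <= expR 1 :> R by have := expR_ge1Dx (1 : R); lra.
have e2 : 4 <= expR 2 :> R.
  rewrite (_ : 2 = 1 + 1) // expRD.
  have : 2 * 2 <= expR 1 * expR 1 :> R by apply: ler_pM => //; lra.
  lra.
rewrite ler_pdivrMr ?mulr_gt0 ?expR_gt0 //.
nra.
Qed.
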